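(* Let $p>1$ and let $A$ be a complex $r$-matrix of order $n_1\times\cdots\times n_r$. Then for every $k\in[r]$, \[ \|A\|_p\geq\left(\frac{n_k^{1/(p-1)}}{(n_1\cdots n_r)^{1/(p-1)}}\sum_{j\in[n_k]}\big|\Sigma A^{(k)}_j\big|^{p/(p-1)}\right)^{(p-1)/p}. \]
   Context: An $r$-matrix of order $n_1\times\cdots\times n_r$ is a function on $[n_1]\times\cdots\times[n_r]$ with values $a_{i_1,\ldots,i_r}$. For $k\in[r]$, $j\in[n_k]$, the slice $A^{(k)}_j$ is the $(r-1)$-matrix obtained by fixing $i_k=j$, and $\Sigma A^{(k)}_j$ is the sum of its entries. The spectral $p$-norm is $\|A\|_p=\max\{|\sum a_{i_1,\ldots,i_r}\overline{x^{(1)}_{i_1}}\cdots\overline{x^{(r)}_{i_r}}|:\mathbf{x}^{(k)}\in\mathbb{C}^{n_k},\ |\mathbf{x}^{(k)}|_p=1\ \forall k\}$. *)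

(* Defs.v *)
From mathcomp Require Import all_boot all_algebra.
From mathcomp Require Import all_classical all_reals all_analysis.
From mathcomp Require Import complex.
Import GRing.Theory Num.Theory.
Local Open Scope ring_scope.
Local Open Scope classical_set_scope.

Set Implicit Arguments. Unset Strict Implicit. Unset Printing Implicit Defensive.

Definition cmod {R : realType} (z : R[i]) : R :=
  Num.sqrt (complex.Re z ^+ 2 + complex.Im z ^+ 2).

(* Multi-indices of an r-matrix of order n_1 x ... x n_r:
   (i_1,...,i_r) with i_k in [n_k]  (0-based ordinals). *)
Definition mindex (r : nat) (n : 'I_r -> nat) : finType :=
  {dffun forall k : 'I_r, 'I_(n k)}.

Definition rmatrix (R : realType) (r : nat) (n : 'I_r -> nat) : Type :=
  mindex n -> R[i].

Definition vnorm_p {R : realType} (p : R) (m : nat) (x : 'I_m -> R[i]) : R :=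
  (\sum_(i < m) cmod (x i) `^ p) `^ (p^-1).

Definition mform {R : realType} (r : nat) (n : 'I_r -> nat) (A : rmatrix R n)
  (x : forall k : 'I_r, 'I_(n k) -> R[i]) : R[i] :=
  \sum_(i : mindex n) A i * \prod_(k < r) conjc (x k (i k)).

(* Spectral p-norm: the maximum (taken as supremum; the set is compact so the
   max is attained) of |form| over x^(k) with |x^(k)|_p = 1 for all k. *)
Definition spec_norm {R : realType} (p : R) (r : nat) (n : 'I_r -> nat)
  (A : rmatrix R n) : R :=
  sup [set cmod (mform A x) | x in
        [set x : forall k : 'I_r, 'I_(n k) -> R[i] | forall k, vnorm_p p (x k) = 1]].

Definition slice_sum {R : realType} (r : nat) (n : 'I_r -> nat) (A : rmatrix R n)
  (k : 'I_r) (j : 'I_(n k)) : R[i] :=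
  \sum_(i : mindex n | i k == j) A i.

(* Main.v *)
Require Import Defs.
From mathcomp Require Import all_boot all_algebra.
From mathcomp Require Import all_classical all_reals all_analysis.
From mathcomp Require Import complex.
From mathcomp Require Import ring lra.
Import order.Order.TTheory GRing.Theory Num.Theory.
Local Open Scope ring_scope.
Local Open Scope complex_scope.

Lemma cmodE (R : realType) (z : R[i]) : `|z| = (cmod z)%:C.
Proof. by rewrite normc_def. Qed.

Lemma cmod_ge0 (R : realType) (z : R[i]) : 0 <= cmod z.
Proof. exact: sqrtr_ge0. Qed.

Lemma cmodM (R : realType) (z w : R[i]) : cmod (z * w) = cmod z * cmod w.
Proof. by apply: complexI; rewrite rmorphM /= -!cmodE normrM. Qed.

Lemma cmodR (R : realType) (a : R) : cmod a%:C = `|a|.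
Proof. by rewrite /cmod /= expr0n addr0 sqrtr_sqr. Qed.

Lemma cmodJ (R : realType) (z : R[i]) : cmod z^*%C = cmod z.
Proof. by case: z => a b; rewrite /cmod /= sqrrN. Qed.

Lemma cmod_sum_le (R : realType) (I : Type) (s : seq I) (P : pred I) (F : I -> R[i]) :
  cmod (\sum_(i <- s | P i) F i) <= \sum_(i <- s | P i) cmod (F i).
Proof.
rewrite -lecR rmorph_sum -cmodE.
apply: le_trans (ler_norm_sum _ _ _) _.
by rewrite le_eqVlt; apply/orP; left; apply/eqP; apply: eq_bigr => i _; rewrite cmodE.
Qed.

Lemma cmod_prod (R : realType) (I : Type) (s : seq I) (P : pred I) (F : I -> R[i]) :
  cmod (\prod_(i <- s | P i) F i) = \prod_(i <- s | P i) cmod (F i).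
Proof.
apply: complexI; rewrite rmorph_prod -cmodE normr_prod.
by apply: eq_bigr => i _; rewrite cmodE.
Qed.

Lemma mulcJ_cmod (R : realType) (z : R[i]) : z * z^*%C = (cmod z ^+ 2)%:C.
Proof.
case: z => a b; rewrite /cmod /= sqr_sqrtr ?addr_ge0 ?sqr_ge0 //.
apply/eqP; rewrite eq_complex /=; apply/andP; split; apply/eqP; ring.
Qed.

Lemma powR_prod (R : realType) (I : Type) (s : seq I) (P : pred I) (F : I -> R) (a : R) :
  (forall i, P i -> 0 <= F i) ->
  \prod_(i <- s | P i) F i `^ a = (\prod_(i <- s | P i) F i) `^ a.
Proof.
move=> hF.
suff []: (fun x y => x = y `^ a /\ 0 <= y) (\prod_(i <- s | P i) F i `^ a) (\prod_(i <- s | P i) F i) by [].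
apply: (big_ind2 (fun x y => x = y `^ a /\ 0 <= y)) => //.
- by split => //; rewrite powR1.
- move=> x1 x2 y1 y2 [-> h1] [-> h2]; split; last exact: mulr_ge0.
  by rewrite powRM.
- by move=> i Pi; split => //; exact: hF.
Qed.

Lemma mform_split (R : realType) (r : nat) (n : 'I_r -> nat) (A : rmatrix R n)
  (k : 'I_r) (x : forall l : 'I_r, 'I_(n l) -> R[i]) (a : 'I_r -> R)
  (hx : forall l, l != k -> forall m, x l m = (a l)%:C) :
  mform A x = (\prod_(l | l != k) a l)%:C *
              \sum_(j < n k) slice_sum A j * (x k j)^*.
Proof.
rewrite /mform.
transitivity (\sum_i A i * ((x k (i k))^* * (\prod_(l | l != k) a l)%:C)).
  apply: eq_bigr => i _; congr (_ * _); rewrite (bigD1 k) //=; congr (_ * _).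
  by rewrite rmorph_prod; apply: eq_bigr => l hl; rewrite hx // conjc_real.
rewrite (partition_big (fun i : mindex n => i k) xpredT) //= mulr_sumr.
apply: eq_bigr => j _.
rewrite /slice_sum.
rewrite big_distrl big_distrr /=.
apply: eq_big => // i hi; rewrite -(eqP hi).
by rewrite [RHS]mulrC mulrA.
Qed.

Lemma vnorm_le1 (R : realType) (p : R) (m : nat) (x : 'I_m -> R[i]) (j : 'I_m) :
  0 < p -> vnorm_p p x = 1 -> cmod (x j) <= 1.
Proof.
move=> p0 hv; rewrite leNgt; apply/negP => hlt.
have h1 : 1 < cmod (x j) `^ p.
  have e1 : (1:R) `^ p = 1 by rewrite powR1.
  rewrite -[X in X < _]e1.
  by apply: gt0_ltr_powR => //; rewrite nnegrE ?cmod_ge0 //.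
have h2 : 1 < \sum_(i < m) cmod (x i) `^ p.
  rewrite (bigD1 j) //=; apply: (lt_le_trans h1).
  by rewrite lerDl sumr_ge0 // => i _; rewrite powR_ge0.
move: hv; rewrite /vnorm_p => hv.
have : 1 `^ p^-1 < (\sum_(i < m) cmod (x i) `^ p) `^ p^-1.
  by apply: gt0_ltr_powR; rewrite ?invr_gt0 ?nnegrE // (le_trans _ (ltW h2)).
by rewrite hv powR1 ltxx.
Qed.

Lemma spec_ge (R : realType) (p : R) (r : nat) (n : 'I_r -> nat) (A : rmatrix R n)
  (x : forall l : 'I_r, 'I_(n l) -> R[i]) :
  0 < p -> (forall l, vnorm_p p (x l) = 1) -> cmod (mform A x) <= spec_norm p A.
Proof.
move=> p0 hx; apply: ub_le_sup; last by exists x.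
exists (\sum_i cmod (A i)) => _ [y hy <-].
rewrite /mform; apply: le_trans (cmod_sum_le _ _ _ _ _) _.
apply: ler_sum => i _; rewrite cmodM cmod_prod.
apply: ler_piMr; first exact: cmod_ge0.
apply: prodr_ile1 => l _; rewrite cmod_ge0 cmodJ /=.
exact: vnorm_le1 (hy l).
Qed.

Lemma vnorm_const (R : realType) (p : R) (m : nat) :
  0 < p -> (0 < m)%N ->
  vnorm_p p (fun _ : 'I_m => (m%:R `^ (- p^-1))%:C) = 1.
Proof.
move=> p0 m0; rewrite /vnorm_p.
under eq_bigr do rewrite cmodR ger0_norm ?powR_ge0 // -powRrM mulNr mulVf ?gt_eqF //.
rewrite sumr_const card_ord powR_inv1 ?ler0n // -(mulr_natr (m%:R^-1)) mulVf ?pnatr_eq0 -?lt0n //.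
by rewrite powR1.
Qed.

Lemma conjcMR (R : realType) (z : R[i]) (a : R) : Num.conj (z * a%:C) = Num.conj z * a%:C.
Proof. by rewrite rmorphM /= (conj_Creal (x := a%:C)) //; apply/complex_realP; exists a. Qed.

Lemma mulCJ_cmod (R : realType) (z : R[i]) : z * Num.conj z = (cmod z ^+ 2)%:C.
Proof. exact: mulcJ_cmod. Qed.

Lemma powRV (R : realType) (x a : R) : 0 <= x -> (x^-1) `^ a = (x `^ a)^-1.
Proof. by move=> x0; rewrite -powR_inv1 // -powRrM mulN1r powRN. Qed.

Theorem theorem23 (R : realType) (p : R) (r : nat) (n : 'I_r -> nat)
  (A : rmatrix R n) (hp : 1 < p) (hn : forall k, (0 < n k)%N) (k : 'I_r) :
  spec_norm p A >=
  ((((n k)%:R : R) `^ ((p - 1)^-1) / (\prod_(l < r) ((n l)%:R : R)) `^ ((p - 1)^-1))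
     * \sum_(j < n k) cmod (slice_sum A j) `^ (p / (p - 1))) `^ ((p - 1) / p).
Proof.
have p0 : 0 < p by apply: lt_trans hp.
have p1 : 0 < p - 1 by rewrite subr_gt0.
have eq1 : p / (p - 1) = (p - 1)^-1 + 1.
  by field; rewrite gt_eqF.
have qE : p / (p - 1) = (p - 1)^-1 * p by rewrite mulrC.
set e := (p - 1)^-1.
have e0 : 0 < e by rewrite invr_gt0.
set S := \sum_(j < n k) cmod (slice_sum A j) `^ (p / (p - 1)).
have S0 : 0 <= S by apply: sumr_ge0 => j _; exact: powR_ge0.
have Npos l : 0 < ((n l)%:R : R) by rewrite ltr0n.
have c0 : (p - 1) / p != 0 by rewrite mulf_eq0 invr_eq0 negb_or !gt_eqF.
case: (eqVneq S 0) => [S00 | Sn0].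
  rewrite S00 mulr0 powR0 //.
  apply: le_trans (spec_ge _ _ _ _ A (fun l _ => ((n l)%:R `^ (- p^-1))%:C) p0 _).
    exact: cmod_ge0.
  by move=> l; apply: vnorm_const.
have Spos : 0 < S by rewrite lt_def Sn0 S0.
set D := S `^ p^-1.
have Dpos : 0 < D by apply: powR_gt0.
pose j0 : 'I_(n k) := Ordinal (hn k).
pose f (m : nat) : R[i] := slice_sum A (insubd j0 m) *
  ((cmod (slice_sum A (insubd j0 m)))^-1 * cmod (slice_sum A (insubd j0 m)) `^ e / D)%:C.
pose x := fun (l : 'I_r) (m : 'I_(n l)) =>
  if l == k then f (val m) else ((n l)%:R `^ (- p^-1))%:C.
have xk j : x k j = slice_sum A j *
  ((cmod (slice_sum A j))^-1 * cmod (slice_sum A j) `^ e / D)%:C.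
  by rewrite /x eqxx /f valKd.
have cmodxk j : cmod (x k j) = cmod (slice_sum A j) `^ e / D.
  rewrite xk cmodM cmodR ger0_norm; last first.
    by apply: mulr_ge0; [apply: mulr_ge0|]; rewrite ?invr_ge0 ?cmod_ge0 ?powR_ge0 ?ltW.
  set u := cmod (slice_sum A j).
  case: (eqVneq u 0) => [->|u0]. by rewrite powR0 ?gt_eqF // mul0r mul0r.
  by rewrite !mulrA mulfV // mul1r.
have hxu : forall l, vnorm_p p (x l) = 1.
  move=> l; case: (eqVneq l k) => [->|lk].
    rewrite /vnorm_p.
    under eq_bigr => j _.
      rewrite cmodxk powRM ?powR_ge0 ?invr_ge0 ?ltW // -powRrM powRV ?ltW //.
      rewrite /D -powRrM mulVf ?gt_eqF // powRr1 // -qE.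
      over.
    by rewrite -mulr_suml -/S mulfV // powR1.
  rewrite -(vnorm_const _ _ _ p0 (hn l)); congr vnorm_p.
  by apply: funext => m; rewrite /x (negbTE lk).
have hform : mform A x = (\prod_(l | l != k) (n l)%:R `^ (- p^-1))%:C * (S / D)%:C.
  rewrite (@mform_split _ _ _ A k x (fun l => (n l)%:R `^ (- p^-1))); last first.
    by move=> l lk m; rewrite /x (negbTE lk).
  congr (_ * _); rewrite /S mulr_suml rmorph_sum; apply: eq_bigr => j _.
  rewrite xk conjcMR mulrA mulCJ_cmod -rmorphM; congr (_%:C).
  set u := cmod (slice_sum A j).
  case: (eqVneq u 0) => [->|u0].
    by rewrite expr0n /= mul0r powR0 ?mul0r // eq1 gt_eqF // addr_gt0.
  rewrite eq1 powRD; last by rewrite u0 implybT.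
  rewrite powRr1 ?cmod_ge0 //; field; by rewrite ?u0 ?gt_eqF.
apply: le_trans (spec_ge _ _ _ _ A x p0 hxu).
rewrite hform cmodM !cmodR !ger0_norm; last 2 first.
- by rewrite mulr_ge0 ?invr_ge0 ?ltW.
- by apply: prodr_ge0 => l _; exact: powR_ge0.
rewrite le_eqVlt; apply/orP; left; apply/eqP.
rewrite [X in _ / X `^ e](bigD1 k) //=.
set Q := \prod_(l < r | l != k) ((n l)%:R : R).
have Q0 : 0 < Q by apply: prodr_gt0 => l _.
under eq_bigr do rewrite powRN.
rewrite prodfV powR_prod; last by move=> l _; exact: ltW.
rewrite -/Q.
have SD : S / D = S `^ ((p - 1) / p).
  rewrite (_ : (p - 1) / p = 1 - p^-1); last by field; rewrite gt_eqF.
  by rewrite powRB ?Sn0 ?implybT // powRr1.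
rewrite SD powRM ?mulr_ge0 ?invr_ge0 ?powR_ge0 ?ltW //.
rewrite powRM ?invr_ge0 ?powR_ge0 // powRV ?powR_ge0 // -!powRrM.
have ec : e * ((p - 1) / p) = p^-1 by rewrite /e; field; rewrite !gt_eqF.
rewrite ec powRM ?ltW //.
have Nk0 : 0 < (n k)%:R `^ p^-1 :> R by apply: powR_gt0.
have Q1 : 0 < Q `^ p^-1 by apply: powR_gt0.
by field; rewrite !gt_eqF.
Qed.
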